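(* Let $N\ge3$ and let $\psi$ be a positive (on $(0,\infty)$) $C^2$ function on $[0,\infty)$ with $\psi(0)=\psi''(0)=0$, $\psi'(0)=1$. Let $\tilde\Phi(r):=\left(\frac{r}{\psi(r)}\right)^{\frac{N-1}{2}}r^{\frac{2-N}{2}}$ for $r>0$. If $(N-2)\psi'(r)+(N-1)r\psi''(r)\ge0$ for all $r>0$, then $\tilde\Phi$ is non-increasing on $(0,\infty)$. *)

(* Defs.v *)
From Stdlib Require Import Reals.
From Coquelicot Require Import Coquelicot.
Open Scope R_scope.

Definition derive_on_nonneg (f df : R -> R) : Prop :=
  (forall r, 0 < r -> is_derive f r (df r)) /\
  filterlim (fun h => (f h - f 0) / h) (at_right 0) (locally (df 0)).

Definition continuous_on_nonneg (f : R -> R) : Prop :=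
  (forall r, 0 < r -> continuous f r) /\
  filterlim f (at_right 0) (locally (f 0)).

Definition C2_nonneg (psi dpsi d2psi : R -> R) : Prop :=
  derive_on_nonneg psi dpsi /\ derive_on_nonneg dpsi d2psi /\
  continuous_on_nonneg d2psi.

Definition Phi_tilde (N : nat) (psi : R -> R) (r : R) : R :=
  Rpower (r / psi r) ((INR N - 1) / 2) * Rpower r ((2 - INR N) / 2).

(* Main.v *)
Require Import Defs.
From Stdlib Require Import Reals Lra.
From Coquelicot Require Import Coquelicot.
Open Scope R_scope.

Lemma mono_pos (f df : R -> R) :
  (forall x, 0 < x -> is_derive f x (df x)) ->
  (forall x, 0 < x -> 0 <= df x) ->
  forall x y, 0 < x -> x <= y -> f x <= f y.
Proof.
  intros Hd Hp x y Hx Hxy.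
  destruct (Req_dec x y) as [E|NE]; [subst; lra|].
  destruct (MVT_cor2 f df x y) as [c [Hc Hc']]; [lra| |].
  - intros c Hc. apply is_derive_Reals. apply Hd. lra.
  - assert (0 <= df c) by (apply Hp; lra).
    assert (0 <= df c * (y - x)) by (apply Rmult_le_pos; lra). lra.
Qed.

Lemma right_lim (f : R -> R) (d : R) (eps : posreal) :
  filterlim (fun h => (f h - f 0) / h) (at_right 0) (locally d) ->
  exists delta : posreal, forall t, 0 < t < delta ->
    Rabs ((f t - f 0) / t - d) < eps.
Proof.
  intros H. apply filterlim_locally with (eps := eps) in H.
  destruct H as [delta Hd]. exists delta. intros t Ht.
  apply (Hd t).
  - unfold ball; simpl; unfold AbsRing_ball, abs, minus, plus, opp; simpl. idtac.
    replace (t + - 0) with t by ring. rewrite Rabs_right; lra.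
  - lra.
Qed.

Theorem lemma4p4 (N : nat) (psi dpsi d2psi : R -> R) :
  (3 <= N)%nat ->
  C2_nonneg psi dpsi d2psi ->
  (forall r, 0 < r -> 0 < psi r) ->
  psi 0 = 0 -> dpsi 0 = 1 -> d2psi 0 = 0 ->
  (forall r, 0 < r -> 0 <= (INR N - 2) * dpsi r + (INR N - 1) * r * d2psi r) ->
  forall r s, 0 < r -> r <= s -> Phi_tilde N psi s <= Phi_tilde N psi r.
Proof.
  intros HN [[Hd1 Hl1] [[Hd2 Hl2] _]] Hpos H0 H1 H2 Hg.
  assert (HN3 : 3 <= INR N) by (apply le_INR in HN; simpl in HN; lra).
  set (g := fun x => (INR N - 1) * (x * dpsi x) - psi x).
  assert (Hgd : forall x, 0 < x -> is_derive g x
     ((INR N - 1) * (1 * dpsi x + x * d2psi x) - dpsi x)).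
  { intros x Hx. unfold g.
    apply (is_derive_minus (fun x => (INR N - 1) * (x * dpsi x)) psi).
    - apply is_derive_scal.
      apply (is_derive_mult (fun t => t) dpsi x 1 (d2psi x)).
      + apply (is_derive_id x).
      + apply Hd2; lra.
      + intros; apply Rmult_comm.
    - apply Hd1; lra. }
  assert (Hgm : forall x y, 0 < x -> x <= y -> g x <= g y).
  { apply (mono_pos g (fun x => (INR N - 1) * (1 * dpsi x + x * d2psi x) - dpsi x)).
    - exact Hgd.
    - intros x Hx. specialize (Hg x Hx). nra. }
  assert (Hgpos : forall x, 0 < x -> 0 <= g x).
  { intros x Hx.
    destruct (right_lim psi (dpsi 0) (mkposreal (1/4) ltac:(lra)) Hl1) as [d1 Hq1].
    destruct (right_lim dpsi (d2psi 0) (mkposreal (1/4) ltac:(lra)) Hl2) as [d2 Hq2].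
    set (t := Rmin x (Rmin (d1/2) (Rmin (d2/2) (1/2)))).
    assert (Ht0 : 0 < t).
    { unfold t. destruct d1, d2; simpl.
      repeat apply Rmin_glb_lt; lra. }
    assert (Htx : t <= x) by apply Rmin_l.
    assert (Ht1 : t < d1).
    { assert (t <= d1/2). { unfold t. eapply Rle_trans; [apply Rmin_r|apply Rmin_l]. }
      destruct d1; simpl in *; lra. }
    assert (Ht2 : t < d2).
    { assert (t <= d2/2). { unfold t. eapply Rle_trans; [apply Rmin_r|].
        eapply Rle_trans; [apply Rmin_r|apply Rmin_l]. }
      destruct d2; simpl in *; lra. }
    assert (Ht3 : t <= 1/2).
    { unfold t. eapply Rle_trans; [apply Rmin_r|].
      eapply Rle_trans; [apply Rmin_r|apply Rmin_r]. }
    specialize (Hq1 t (conj Ht0 Ht1)). specialize (Hq2 t (conj Ht0 Ht2)).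
    simpl in Hq1, Hq2. rewrite H0, H1, H2 in *.
    set (q1 := (psi t - 0) / t) in Hq1.
    set (q2 := (dpsi t - 1) / t) in Hq2.
    assert (E1 : psi t = t * q1) by (unfold q1; field; lra).
    assert (E2 : dpsi t = 1 + t * q2) by (unfold q2; field; lra).
    apply Rabs_def2 in Hq1. apply Rabs_def2 in Hq2.
    assert (0 <= g t).
    { unfold g. rewrite E1, E2.
      assert (0 <= t * ((INR N - 1) * (1 + t * q2) - q1)); [|nra].
      apply Rmult_le_pos; [lra|].
      assert (t * q2 <= 1/8) by nra.
      assert (-1/8 <= t * q2) by nra.
      nra. }
    specialize (Hgm t x Ht0 Htx). lra. }
  set (e := fun x => - (((INR N - 1) / 2) * (ln x - ln (psi x)) + ((2 - INR N) / 2) * ln x)).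
  assert (HP : forall x, 0 < x -> Phi_tilde N psi x = exp (- e x)).
  { intros x Hx. unfold Phi_tilde, e, Rpower. rewrite Ropp_involutive, exp_plus.
    rewrite ln_div; [|lra|apply Hpos; lra]. f_equal; f_equal; ring. }
  intros r s Hr Hrs.
  rewrite (HP s ltac:(lra)), (HP r Hr).
  assert (He : forall x, 0 < x -> is_derive e x (g x * / (2 * x * psi x))).
  { intros x Hx. assert (Hpx := Hpos x Hx).
    assert (D : is_derive e x (opp (plus ((INR N - 1) / 2 * minus (/ x) (scal (dpsi x) (/ psi x)))
                   ((2 - INR N) / 2 * / x)))).
    { unfold e.
      apply (is_derive_opp (fun x => ((INR N - 1) / 2 * (ln x - ln (psi x)) + (2 - INR N) / 2 * ln x))).
      apply (is_derive_plus (fun x => ((INR N - 1) / 2 * (ln x - ln (psi x)))) (fun x => (2 - INR N) / 2 * ln x)).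
      - apply is_derive_scal.
        apply (is_derive_minus ln (fun x => ln (psi x))).
        + apply is_derive_ln; lra.
        + apply (is_derive_comp ln psi).
          * apply is_derive_ln; lra.
          * apply Hd1; lra.
      - apply is_derive_scal. apply is_derive_ln; lra. }
    replace (g x * / (2 * x * psi x)) with
      (opp (plus ((INR N - 1) / 2 * minus (/ x) (scal (dpsi x) (/ psi x)))
                   ((2 - INR N) / 2 * / x))); [exact D|].
    unfold g, opp, plus, minus, scal; simpl. unfold mult, opp, plus; simpl.
    field; lra. }
  assert (Hes := mono_pos e (fun x => g x * / (2 * x * psi x)) He).
  assert (e r <= e s).
  { apply Hes; [|exact Hr|exact Hrs].
    intros x Hx. apply Rmult_le_pos; [apply Hgpos; lra|].
    apply Rlt_le, Rinv_0_lt_compat. assert (Hpx := Hpos x Hx).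
    apply Rmult_lt_0_compat; [lra|exact Hpx]. }
  destruct (Rle_lt_or_eq_dec _ _ H) as [Hl|Hq].
  - left. apply exp_increasing. lra.
  - rewrite Hq. lra.
Qed.
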